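(* Let $n\ge3$ and $r\in[3,n]$. Then: (1) $\mathfrak b_{a_2}\cdot\tilde{\mathfrak b}_r=\prod_{i=1}^r\mathfrak b_{a_i}$; (2) $I_{C_n}=\mathfrak b_{a_2}\cdot\tilde{\mathfrak b}_r\cdot\prod_{i=r+1}^{n+1}\mathfrak b_{a_i}$.
   Context: Let $K$ be a field, $N\ge2$, $R=K[X_1,\dots,X_N]$, $X=X_1$, $Y=X_2$. $[x,y]=\{z\in\mathbb Z:x\le z\le y\}$. For $i\in\mathbb N^+$, $\mathfrak b_i=\langle X^i,Y^i\rangle$. Fix an integer $n\ge 3$ and positive integers $a_1,\dots,a_{n+1}$ with (C1) $a_{n+1}=a_1+\dots+a_{n-1}+2a_n$ and (C2) $a_{i+1}>2(a_1+\dots+a_i)$ for all $i\in[1,n-1]$. For $I\subseteq[1,n+1]$ put $a_I=\sum_{i\in I}a_i$ ($a_\emptyset=0$). $C_n=\{a_I:I\subseteq[1,n+1]\}$, $\mu=a_{[1,n+1]}$, and $I_{C_n}=\langle X^{\mu-c}Y^c:c\in C_n\rangle$. For $r\in[3,n]$, $\tilde{\mathfrak b}_r$ is the ideal generated by $\mathfrak b_{a_1}\mathfrak b_{a_3}\mathfrak b_{a_4}\cdots\mathfrak b_{a_r}$ together with the monomial $X^{a_{[3,r]}-a_2}Y^{a_3-a_2}$. *)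

(* Defs.v *)
From HB Require Import structures.
From mathcomp Require Import all_boot all_order all_algebra.
From mathcomp Require Import mpoly.
Set Implicit Arguments. Unset Strict Implicit. Unset Printing Implicit Defensive.
Import GRing.Theory.
Local Open Scope ring_scope.

(* The polynomial ring R = K[X_1,...,X_{N}] with N >= 2 is encoded as
   {mpoly K[N.+2]}; X = X_1 is 'X_0 and Y = X_2 is 'X_1 (0-based indices). *)
Section Ideals.
Variable (K : fieldType) (N : nat).
Local Notation R := {mpoly K[N.+2]}.

Definition ideal_eq (I J : R -> Prop) : Prop := forall p, I p <-> J p.

Definition ideal_gen (S : R -> Prop) : R -> Prop :=
  fun p => exists s : seq (R * R),
    (forall c, c \in s -> S c.2) /\ p = \sum_(c <- s) c.1 * c.2.

Definition ideal_mul (I J : R -> Prop) : R -> Prop :=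
  ideal_gen (fun p => exists a b, I a /\ J b /\ p = a * b).

Definition ideal_one : R -> Prop := ideal_gen (fun p => p = 1).

Definition ideal_prod (l : seq (R -> Prop)) : R -> Prop :=
  foldr ideal_mul ideal_one l.

Definition varX : R := 'X_(@Ordinal N.+2 0 isT).
Definition varY : R := 'X_(@Ordinal N.+2 1 isT).

Definition bideal (i : nat) : R -> Prop :=
  ideal_gen (fun p => p = varX ^+ i \/ p = varY ^+ i).

(* a : nat -> nat, only a_1, ..., a_{n+1} are relevant. *)
Definition asum (a : nat -> nat) (x y : nat) : nat := (\sum_(x <= i < y.+1) a i)%N.

Definition bprod (a : nat -> nat) (x y : nat) : R -> Prop :=
  ideal_prod [seq bideal (a i) | i <- index_iota x y.+1].

Definition btilde (a : nat -> nat) (r : nat) : R -> Prop :=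
  ideal_gen (fun p =>
    ideal_mul (bideal (a 1%N)) (bprod a 3 r) p \/
    p = varX ^+ (asum a 3 r - a 2%N) * varY ^+ (a 3%N - a 2%N)).

(* I_{C_n} = < X^{mu - c} Y^c : c in C_n >, C_n = { a_I : I subset [1,n+1] },
   mu = a_{[1,n+1]}. Subsets I of [1,n+1] are encoded as subsets of 'I_(n+1)
   via i |-> i+1. *)
Definition ICn (a : nat -> nat) (n : nat) : R -> Prop :=
  ideal_gen (fun p => exists c : nat,
    (exists I : {set 'I_n.+1}, c = (\sum_(i in I) a i.+1)%N) /\
    p = varX ^+ (asum a 1 n.+1 - c) * varY ^+ c).

End Ideals.

(* Main.v *)
Require Import Defs.
From HB Require Import structures.
From mathcomp Require Import all_boot all_order all_algebra.
From mathcomp Require Import mpoly.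
From mathcomp Require Import zify.
Set Implicit Arguments. Unset Strict Implicit. Unset Printing Implicit Defensive.
Import GRing.Theory.

Section Aux.
Variables (K : fieldType) (N : nat).
Local Notation R := {mpoly K[N.+2]}.
Local Open Scope ring_scope.

Definition isId (J : R -> Prop) :=
  J 0 /\ (forall x y, J x -> J y -> J (x + y)) /\ (forall c x, J x -> J (c * x)).

Lemma gen_isId (S : R -> Prop) : isId (ideal_gen S).
Proof.
split; first by exists [::]; split=> //; rewrite big_nil.
split.
- move=> x y [s1 [H1 ->]] [s2 [H2 ->]]; exists (s1 ++ s2); split; last by rewrite big_cat.
  by move=> c; rewrite mem_cat => /orP[]; [exact: H1|exact: H2].
- move=> c x [s [H ->]]; exists [seq (c * p.1, p.2) | p <- s]; split.
  + by move=> q /mapP [p Hp ->] /=; exact: H.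
  + by rewrite big_map mulr_sumr; apply: eq_bigr => p _ /=; rewrite mulrA.
Qed.

Lemma gen_sub (S : R -> Prop) x : S x -> ideal_gen S x.
Proof.
move=> Hx; exists [:: (1, x)]; split; first by move=> c; rewrite inE => /eqP ->.
by rewrite big_cons big_nil mul1r addr0.
Qed.

Lemma gen_min (S J : R -> Prop) : isId J -> (forall x, S x -> J x) ->
  forall x, ideal_gen S x -> J x.
Proof.
move=> [J0 [JD JM]] HS x [s [Hs ->]].
elim: s Hs => [|c s IH] Hs; first by rewrite big_nil.
rewrite big_cons; apply: JD; first by apply: JM; apply: HS; apply: Hs; rewrite inE eqxx.
by apply: IH => q Hq; apply: Hs; rewrite inE Hq orbT.
Qed.

Lemma gen_mono (S T : R -> Prop) : (forall x, S x -> ideal_gen T x) ->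
  forall x, ideal_gen S x -> ideal_gen T x.
Proof. exact: gen_min (gen_isId T). Qed.

Lemma ieq_refl (I : R -> Prop) : ideal_eq I I.
Proof. by []. Qed.
Lemma ieq_sym (I J : R -> Prop) : ideal_eq I J -> ideal_eq J I.
Proof. by move=> H p; split => /H. Qed.
Lemma ieq_trans (I J L : R -> Prop) : ideal_eq I J -> ideal_eq J L -> ideal_eq I L.
Proof. by move=> H1 H2 p; split => [/H1/H2|/H2/H1]. Qed.

Lemma gen_ext (S T : R -> Prop) : (forall p, S p <-> T p) ->
  ideal_eq (ideal_gen S) (ideal_gen T).
Proof.
by move=> H p; split; apply: gen_mono => x Hx; apply: gen_sub; apply/H.
Qed.

Lemma mul_eq (I I' J J' : R -> Prop) : ideal_eq I I' -> ideal_eq J J' ->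
  ideal_eq (ideal_mul I J) (ideal_mul I' J').
Proof.
move=> HI HJ; apply: gen_ext => p; split.
- by move=> [x [y [Hx [Hy ->]]]]; exists x, y; split; [apply/HI|split; [apply/HJ|]].
- by move=> [x [y [Hx [Hy ->]]]]; exists x, y; split; [apply/HI|split; [apply/HJ|]].
Qed.

Lemma mul_gen (S T : R -> Prop) :
  ideal_eq (ideal_mul (ideal_gen S) (ideal_gen T))
    (ideal_gen (fun p => exists s t, S s /\ T t /\ p = s * t)).
Proof.
move=> p; split.
- apply: gen_mono => _ [x [y [Hx [Hy ->]]]].
  have [G0 [GD GM]] := gen_isId (fun p => exists s t, S s /\ T t /\ p = s * t).
  move: y Hy; pattern x; apply: (gen_min (S := S)) Hx.
  + split; first by move=> y _; rewrite mul0r.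
    split; first by move=> u v Hu Hv y Hy; rewrite mulrDl; apply: GD; [apply: Hu|apply: Hv].
    by move=> c u Hu y Hy; rewrite -mulrA; apply: GM; apply: Hu.
  + move=> s Hs y Hy; pattern y; apply: (gen_min (S := T)) Hy.
    * split; first by rewrite mulr0.
      split; first by move=> u v Hu Hv; rewrite mulrDr; apply: GD.
      by move=> c u Hu; rewrite mulrCA; apply: GM.
    * by move=> t Ht; apply: gen_sub; exists s, t.
- apply: gen_mono => _ [s [t [Hs [Ht ->]]]]; apply: gen_sub.
  by exists s, t; split; [apply: gen_sub|split; [apply: gen_sub|]].
Qed.

Definition mon (i j : nat) : R := varX K N ^+ i * varY K N ^+ j.
Definition G (P : nat -> nat -> Prop) : R -> Prop :=
  ideal_gen (fun p => exists i j, P i j /\ p = mon i j).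

Lemma monM i1 j1 i2 j2 : mon i1 j1 * mon i2 j2 = mon (i1 + i2) (j1 + j2).
Proof. by rewrite /mon !exprD mulrACA. Qed.

Lemma G_ext (P Q : nat -> nat -> Prop) : (forall i j, P i j <-> Q i j) ->
  ideal_eq (G P) (G Q).
Proof.
move=> H; apply: gen_ext => p; split => -[i [j [Hij ->]]]; exists i, j; split => //; exact/H.
Qed.

Lemma mul_G (P Q : nat -> nat -> Prop) :
  ideal_eq (ideal_mul (G P) (G Q))
    (G (fun i j => exists i1 j1 i2 j2, P i1 j1 /\ Q i2 j2 /\ i = (i1 + i2)%N /\ j = (j1 + j2)%N)).
Proof.
apply: ieq_trans (mul_gen _ _) _; apply: gen_ext => p; split.
- move=> [_ [_ [[i1 [j1 [H1 ->]]] [[i2 [j2 [H2 ->]]] ->]]]].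
  exists (i1 + i2)%N, (j1 + j2)%N; split; last by rewrite monM.
  by exists i1, j1, i2, j2.
- move=> [i [j [[i1 [j1 [i2 [j2 [H1 [H2 [-> ->]]]]]]] ->]]].
  exists (mon i1 j1), (mon i2 j2); split; first by exists i1, j1.
  by split; [exists i2, j2|rewrite monM].
Qed.

Lemma G_div (P : nat -> nat -> Prop) i j i' j' : P i j -> (i <= i')%N -> (j <= j')%N ->
  G P (mon i' j').
Proof.
move=> H hi hj; have -> : mon i' j' = mon (i' - i) (j' - j) * mon i j.
  by rewrite monM !subnK.
by apply: (gen_isId _).2.2; apply: gen_sub; exists i, j.
Qed.

Lemma bideal_G k : ideal_eq (@bideal K N k)
  (G (fun i j => (i = k /\ j = 0%N) \/ (i = 0%N /\ j = k))).
Proof.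
apply: gen_ext => p; split.
- case=> ->; [exists k, 0%N; split; [by left|by rewrite /mon expr0 mulr1]
             |exists 0%N, k; split; [by right|by rewrite /mon expr0 mul1r]].
- move=> [i [j [[[-> ->]|[-> ->]] ->]]]; [left; by rewrite /mon expr0 mulr1
                                       |right; by rewrite /mon expr0 mul1r].
Qed.

Lemma one_G : ideal_eq (@ideal_one K N) (G (fun i j => i = 0%N /\ j = 0%N)).
Proof.
apply: gen_ext => p; split.
- by move=> ->; exists 0%N, 0%N; split => //; rewrite /mon !expr0 mulr1.
- by move=> [i [j [[-> ->] ->]]]; rewrite /mon !expr0 mulr1.
Qed.

End Aux.

Fixpoint SS (l : seq nat) (i j : nat) : Prop :=
  match l with
  | [::] => i = 0%N /\ j = 0%N
  | k :: l => exists i' j', SS l i' j' /\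
      ((i = k + i' /\ j = j')%N \/ (i = i' /\ j = k + j')%N)
  end.

Lemma SS_cat l1 l2 i j : SS (l1 ++ l2) i j <->
  exists i1 j1 i2 j2, SS l1 i1 j1 /\ SS l2 i2 j2 /\ i = (i1 + i2)%N /\ j = (j1 + j2)%N.
Proof.
elim: l1 i j => [|k l1 IH] i j /=.
  split; first by move=> H; exists 0%N, 0%N, i, j.
  by move=> [i1 [j1 [i2 [j2 [[-> ->] [H [-> ->]]]]]]].
split.
- move=> [i' [j' [/IH [i1 [j1 [i2 [j2 [H1 [H2 [-> ->]]]]]]] Hc]]].
  case: Hc => [[-> ->]|[-> ->]].
  + exists (k + i1)%N, j1, i2, j2; split; last by split => //; split; lia.
    by exists i1, j1; split => //; left.
  + exists i1, (k + j1)%N, i2, j2; split; last by split => //; split; lia.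
    by exists i1, j1; split => //; right.
- move=> [i1 [j1 [i2 [j2 [[i' [j' [H1 Hc]]] [H2 [-> ->]]]]]]].
  exists (i' + i2)%N, (j' + j2)%N; split; first by apply/IH; exists i', j', i2, j2.
  by case: Hc => [[-> ->]|[-> ->]]; [left|right]; split; lia.
Qed.

Lemma SS_swap x y l i j : SS (x :: y :: l) i j -> SS (y :: x :: l) i j.
Proof.
move=> [i' [j' [[i'' [j'' [H Hc2]]] Hc1]]].
case: Hc1 => [[-> ->]|[-> ->]]; case: Hc2 => [[-> ->]|[-> ->]].
- by exists (x + i'')%N, j''; split; [exists i'', j''; split => //; left|left; split; lia].
- by exists (x + i'')%N, j''; split; [exists i'', j''; split => //; left|right; split; lia].
- by exists i'', (x + j'')%N; split; [exists i'', j''; split => //; right|left; split; lia].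
- by exists i'', (x + j'')%N; split; [exists i'', j''; split => //; right|right; split; lia].
Qed.

Lemma SS_allX l : SS l (sumn l) 0.
Proof.
elim: l => [|k l IH] //=; exists (sumn l), 0%N; split => //; by left.
Qed.

Lemma sumn_big (f : nat -> nat) l : sumn (map f l) = (\sum_(i <- l) f i)%N.
Proof. by rewrite sumnE big_map. Qed.

Lemma SS_char (f : nat -> nat) m s i j : SS (map f (iota s m)) i j <->
  exists g : nat -> bool,
    j = (\sum_(s <= k < s + m) (if g k then f k else 0))%N /\
    i = (\sum_(s <= k < s + m) (if g k then 0 else f k))%N.
Proof.
elim: m s i j => [|m IH] s i j.
  rewrite addn0 /=; split.
  - by move=> [-> ->]; exists (fun _ => true); rewrite !big_geq.
  - by move=> [g [-> ->]]; rewrite !big_geq.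
have Hs : (s < s + m.+1)%N by lia.
have Em : (s + m.+1 = s.+1 + m)%N by lia.
rewrite /=; split.
- move=> [i' [j' [/IH [g [-> ->]] Hc]]].
  have E1 : forall (b : bool) (F : nat -> bool -> nat),
      (\sum_(s.+1 <= k < s.+1 + m) F k (if k == s then b else g k) =
       \sum_(s.+1 <= k < s.+1 + m) F k (g k))%N.
    move=> b F; apply: eq_big_nat => k /andP[hk _].
    by have -> : (k == s) = false by apply/eqP; lia.
  case: Hc => [[-> ->]|[-> ->]];
    [exists (fun k => if k == s then false else g k)
    |exists (fun k => if k == s then true else g k)];
    rewrite (big_ltn Hs) (big_ltn Hs) Em eqxx;
    rewrite (E1 _ (fun k c => if c then f k else 0%N)) (E1 _ (fun k c => if c then 0%N else f k)) //.
- move=> [g [-> ->]]; rewrite (big_ltn Hs) (big_ltn Hs) Em.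
  exists (\sum_(s.+1 <= k < s.+1 + m) (if g k then 0 else f k))%N,
         (\sum_(s.+1 <= k < s.+1 + m) (if g k then f k else 0))%N.
  split; first by apply/IH; exists g.
  by case: (g s); [right|left]; rewrite ?add0n ?addn0.
Qed.

Section Aux2.
Variables (K : fieldType) (N : nat).
Local Notation R := {mpoly K[N.+2]}.
Local Open Scope ring_scope.

Lemma prod_SS (f : nat -> nat) l :
  ideal_eq (ideal_prod [seq @bideal K N (f i) | i <- l]) (@G K N (SS (map f l))).
Proof.
elim: l => [|k l IH] /=.
  by apply: ieq_trans (@one_G K N) _; apply: G_ext.
apply: ieq_trans (mul_eq (@bideal_G K N (f k)) IH) _.
apply: ieq_trans (mul_G _ _) _; apply: G_ext => i j; split.
- move=> [i1 [j1 [i2 [j2 [Hb [H2 [-> ->]]]]]]]; exists i2, j2; split => //.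
  by case: Hb => [[-> ->]|[-> ->]]; [left|right]; split; lia.
- move=> [i' [j' [H Hc]]].
  case: Hc => [[-> ->]|[-> ->]]; [exists (f k), 0%N, i', j'|exists 0%N, (f k), i', j'].
  + by split; [left|split => //; split; lia].
  + by split; [right|split => //; split; lia].
Qed.

Lemma gen_or (I : R -> Prop) (S T : R -> Prop) : ideal_eq I (ideal_gen S) ->
  ideal_eq (ideal_gen (fun p => I p \/ T p)) (ideal_gen (fun p => S p \/ T p)).
Proof.
move=> H p; split; apply: gen_mono => x.
- case=> [/H|Hx]; last by apply: gen_sub; right.
  by apply: gen_mono => y Hy; apply: gen_sub; left.
- case=> [Hx|Hx]; apply: gen_sub; [left; apply/H; exact: gen_sub|by right].
Qed.

End Aux2.

Theorem proposition4p6 (K : fieldType) (N : nat) (n : nat) (a : nat -> nat) (r : nat) :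
  (3 <= n)%N ->
  (forall i, (1 <= i <= n.+1)%N -> (0 < a i)%N) ->
  (* (C1) *) a n.+1 = (asum a 1 n.-1 + 2 * a n)%N ->
  (* (C2) *) (forall i, (1 <= i <= n.-1)%N -> (a i.+1 > 2 * asum a 1 i)%N) ->
  (3 <= r <= n)%N ->
  ideal_eq (ideal_mul (@bideal K N (a 2)) (@btilde K N a r)) (@bprod K N a 1 r) /\
  ideal_eq (@ICn K N a n)
    (ideal_mul (ideal_mul (@bideal K N (a 2)) (@btilde K N a r)) (@bprod K N a r.+1 n.+1)).
Proof.
move=> hn hpos C1 C2 /andP[hr3 hrn].
have C3 : (2 * (a 1 + a 2) < a 3)%N.
  have := C2 2%N; rewrite /asum big_ltn // big_ltn // big_geq // addn0; apply.
  by apply/andP; split => //; lia.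
have EL : index_iota 3 r.+1 = 3%N :: index_iota 4 r.+1.
  by rewrite /index_iota (_ : (r.+1 - 3 = (r.+1 - 4).+1)%N) //; lia.
have E1 : index_iota 1 r.+1 = 1%N :: 2%N :: index_iota 3 r.+1.
  by rewrite /index_iota (_ : (r.+1 - 1 = (r.+1 - 3).+2)%N) //; lia.
set L' := map a (index_iota 4 r.+1).
have HA : asum a 3 r = (a 3 + sumn L')%N.
  by rewrite /asum -sumn_big EL.
have P1 : ideal_eq (ideal_mul (@bideal K N (a 2)) (@btilde K N a r)) (@bprod K N a 1 r).
  have HT : ideal_eq (@btilde K N a r) (@G K N (fun i j => SS (a 1 :: a 3 :: L') i j \/
               (i = asum a 3 r - a 2 /\ j = a 3 - a 2)%N)).
    apply: ieq_trans.
      exact: (gen_or _ (@prod_SS K N a (1 :: index_iota 3 r.+1))).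
    apply: gen_ext => p; rewrite EL; split.
    - case=> [[i [j [H ->]]]|->].
      + by exists i, j; split => //; left.
      + by exists (asum a 3 r - a 2)%N, (a 3 - a 2)%N; split => //; right.
    - move=> [i [j [[H|[-> ->]] ->]]]; first by left; exists i, j.
      by right.
  apply: ieq_trans (mul_eq (@bideal_G K N (a 2)) HT) _.
  apply: ieq_trans (mul_G _ _) _.
  apply: ieq_sym; rewrite /bprod E1; apply: ieq_trans (prod_SS _ _) _.
  rewrite EL.
  move=> p; split; apply: gen_mono => _ [i [j [H ->]]].
  - apply: gen_sub; exists i, j; split => //.
    have [i' [j' [H' Hc]]] := SS_swap (x := a 1) (y := a 2) (l := a 3 :: L') H.
    case: Hc => [[-> ->]|[-> ->]].
    + by exists (a 2), 0%N, i', j'; split; [left|split; [left|]].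
    + by exists 0%N, (a 2), i', j'; split; [right|split; [left|]].
  - move: H => [i1 [j1 [i2 [j2 [Hb [Ht [-> ->]]]]]]].
    case: Ht => [Hs|[-> ->]].
    + apply: gen_sub; exists (i1 + i2)%N, (j1 + j2)%N; split => //.
      apply: (SS_swap (x := a 2) (y := a 1) (l := a 3 :: L')); exists i2, j2; split => //.
      by case: Hb => [[-> ->]|[-> ->]]; [left|right]; split; lia.
    + case: Hb => [[-> ->]|[-> ->]].
      * apply: (@G_div K N _ (a 3 + sumn L') (a 1 + a 2)).
        - rewrite /= -/L'; exists (a 3 + sumn L')%N, (a 2); split; last by right; split; lia.
          exists (a 3 + sumn L')%N, 0%N; split; last by right; split; lia.
          by exists (sumn L'), 0%N; split; [exact: SS_allX|left; split; lia].
        - rewrite HA; lia.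
        - lia.
      * apply: (@G_div K N _ (a 1 + a 2 + sumn L') (a 3)).
        - rewrite /= -/L'; exists (a 2 + sumn L')%N, (a 3); split; last by left; split; lia.
          exists (sumn L')%N, (a 3); split; last by left; split; lia.
          by exists (sumn L'), 0%N; split; [exact: SS_allX|right; split; lia].
        - rewrite HA; lia.
        - lia.
split; first exact: P1.
apply: ieq_trans _ (ieq_sym (mul_eq P1 (ieq_refl _))).
apply: ieq_trans _ (ieq_sym (mul_eq (prod_SS _ _) (prod_SS _ _))).
apply: ieq_trans _ (ieq_sym (mul_G _ _)).
have Eio : index_iota 1 r.+1 ++ index_iota r.+1 n.+2 = iota 1 n.+1.
  rewrite /index_iota [RHS](_ : iota 1 n.+1 = iota 1 ((r.+1 - 1) + (n.+2 - r.+1))); last first.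
    by congr iota; lia.
  by rewrite iotaD; congr (_ ++ iota _ _); lia.
have Hcomb : forall i j,
  (exists i1 j1 i2 j2, SS (map a (index_iota 1 r.+1)) i1 j1 /\
     SS (map a (index_iota r.+1 n.+2)) i2 j2 /\ i = (i1 + i2)%N /\ j = (j1 + j2)%N) <->
  exists g : nat -> bool,
    j = (\sum_(1 <= k < 1 + n.+1) (if g k then a k else 0))%N /\
    i = (\sum_(1 <= k < 1 + n.+1) (if g k then 0 else a k))%N.
  move=> i j; rewrite -SS_char -Eio map_cat; split; by move/SS_cat.
have Hsplit : forall g : nat -> bool, asum a 1 n.+1 =
    (\sum_(1 <= k < 1 + n.+1) (if g k then a k else 0) +
     \sum_(1 <= k < 1 + n.+1) (if g k then 0 else a k))%N.
  move=> g; rewrite /asum (eq_bigr (fun k => (if g k then a k else 0) + (if g k then 0 else a k))%N).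
    by rewrite big_split add1n.
  by move=> k _; case: (g k); rewrite ?addn0.
have Hshift : forall H : nat -> nat,
    (\sum_(1 <= k < 1 + n.+1) H k = \sum_(i < n.+1) H i.+1)%N.
  by move=> H; rewrite add1n big_add1 /= big_mkord.
apply: gen_ext => p; split.
- move=> [c [[I ->] ->]].
  pose g := fun k : nat => (inord k.-1 : 'I_n.+1) \in I.
  have Hc : (\sum_(i in I) a i.+1 = \sum_(1 <= k < 1 + n.+1) (if g k then a k else 0))%N.
    by rewrite Hshift big_mkcond /=; apply: eq_bigr => i _; rewrite /g /= inord_val.
  exists (asum a 1 n.+1 - \sum_(i in I) a i.+1)%N, (\sum_(i in I) a i.+1)%N; split => //.
  apply/Hcomb; exists g; split; first exact: Hc.
  by rewrite (Hsplit g) Hc addKn.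
- move=> [i [j [/Hcomb [g [-> ->]] ->]]].
  exists (\sum_(1 <= k < 1 + n.+1) (if g k then a k else 0))%N; split.
  + exists [set i : 'I_n.+1 | g i.+1].
    rewrite Hshift [RHS]big_mkcond.
    by apply: eq_bigr => k _; rewrite inE.
  + by rewrite /mon (Hsplit g) addKn.
Qed.
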